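(* Let $G=G_1\ast_C G_2$ be an amalgamated free product over an infinite cyclic subgroup $C$. If $G_2$ is abelian, assume furthermore that $G_2=K\oplus L$ with $C\leqslant K$ and $|L|>2$. Then $G$ has a nontrivial automorphism whose restriction to $G_1$ is the identity. *)

(* Defs.v *)
From Stdlib Require Import ZArith.

Record Group := {
  gcar :> Type;
  gmul : gcar -> gcar -> gcar;
  gone : gcar;
  ginv : gcar -> gcar;
  gmulA : forall x y z, gmul x (gmul y z) = gmul (gmul x y) z;
  gmul1 : forall x, gmul gone x = x;
  gmulV : forall x, gmul (ginv x) x = gone
}.

Arguments gmul {g}.
Arguments gone {g}.
Arguments ginv {g}.

Record Hom (G H : Group) := {
  hfun :> G -> H;
  hmul : forall x y : G, hfun (gmul x y) = gmul (hfun x) (hfun y)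
}.

Definition Zgroup : Group :=
  {| gcar := Z; gmul := Z.add; gone := 0%Z; ginv := Z.opp;
     gmulA := Z.add_assoc; gmul1 := Z.add_0_l; gmulV := Z.add_opp_diag_l |}.

Definition injective {A B : Type} (f : A -> B) := forall x y, f x = f y -> x = y.

(* G together with i1 : G1 -> G, i2 : G2 -> G is the amalgamated free product
   G1 *_C G2, where C is identified (via j1, j2) with subgroups of G1 and G2:
   the universal property of the pushout of j1 and j2. *)
Definition IsAmalgam (C G1 G2 G : Group) (j1 : Hom C G1) (j2 : Hom C G2)
  (i1 : Hom G1 G) (i2 : Hom G2 G) : Prop :=
  (forall c : C, i1 (j1 c) = i2 (j2 c)) /\
  (forall (H : Group) (f1 : Hom G1 H) (f2 : Hom G2 H),
     (forall c : C, f1 (j1 c) = f2 (j2 c)) ->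
     exists f : Hom G H,
       (forall g : G1, f (i1 g) = f1 g) /\ (forall g : G2, f (i2 g) = f2 g) /\
       (forall f' : Hom G H,
          (forall g : G1, f' (i1 g) = f1 g) -> (forall g : G2, f' (i2 g) = f2 g) ->
          forall x : G, f' x = f x)).

Definition abelian (G : Group) := forall x y : G, gmul x y = gmul y x.

Definition subgroup (G : Group) (S : G -> Prop) :=
  S gone /\ (forall x y, S x -> S y -> S (gmul x y)) /\ (forall x, S x -> S (ginv x)).

Definition direct_sum (G : Group) (K L : G -> Prop) :=
  subgroup G K /\ subgroup G L /\
  forall g : G, exists k l, K k /\ L l /\ g = gmul k l /\
    forall k' l', K k' -> L l' -> g = gmul k' l' -> k' = k /\ l' = l.

Definition card_gt2 {A : Type} (L : A -> Prop) :=
  exists a b c, L a /\ L b /\ L c /\ a <> b /\ a <> c /\ b <> c.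

Definition automorphism (G : Group) (phi : Hom G G) :=
  exists psi : G -> G, (forall x, psi (phi x) = x) /\ (forall x, phi (psi x) = x).

(* Main.v *)
Require Import Defs.
From mathcomp Require classical_sets.
From Stdlib Require Import ZArith Lia Classical ClassicalEpsilon ProofIrrelevance FunctionalExtensionality PropExtensionality.

Lemma gmulVr (G : Group) (x : G) : gmul x (ginv x) = gone.
Proof.
transitivity (gmul (gmul (ginv (ginv x)) (ginv x)) (gmul x (ginv x))).
{ rewrite gmulV, gmul1. reflexivity. }
rewrite <- gmulA, (gmulA G (ginv x) x), gmulV, gmul1. apply gmulV.
Qed.

Lemma gmul1r (G : Group) (x : G) : gmul x gone = x.
Proof. rewrite <- (gmulV G x), gmulA, gmulVr, gmul1. reflexivity. Qed.

Lemma gcancel_l (G : Group) (a x y : G) : gmul a x = gmul a y -> x = y.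
Proof.
intro E. rewrite <- (gmul1 G x), <- (gmul1 G y), <- (gmulV G a), <- !gmulA, E. reflexivity.
Qed.

Lemma gcancel_r (G : Group) (a x y : G) : gmul x a = gmul y a -> x = y.
Proof.
intro E. rewrite <- (gmul1r G x), <- (gmul1r G y), <- (gmulVr G a), !gmulA, E. reflexivity.
Qed.

Lemma hom1 (G H : Group) (h : Hom G H) : h gone = gone.
Proof.
apply (gcancel_l H (h gone)). rewrite <- hmul, gmul1, gmul1r. reflexivity.
Qed.

Lemma homV (G H : Group) (h : Hom G H) (x : G) : h (ginv x) = ginv (h x).
Proof.
apply (gcancel_r H (h x)). rewrite <- hmul, !gmulV. apply hom1.
Qed.

Lemma ginv_mul (G : Group) (x y : G) : ginv (gmul x y) = gmul (ginv y) (ginv x).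
Proof.
apply (gcancel_r G (gmul x y)). rewrite gmulV, gmulA, <- (gmulA G (ginv y)), gmulV, gmul1r, gmulV.
reflexivity.
Qed.

Lemma gmul4 (G : Group) (ab : abelian G) (a b c d : G) :
  gmul (gmul a b) (gmul c d) = gmul (gmul a c) (gmul b d).
Proof.
rewrite <- !gmulA. f_equal. rewrite !gmulA. f_equal. apply ab.
Qed.

Definition trivhom (G H : Group) : Hom G H :=
  Build_Hom G H (fun _ => gone) (fun _ _ => eq_sym (gmul1 H gone)).

Definition homcomp (A B C : Group) (g : Hom B C) (f : Hom A B) : Hom A C.
Proof.
refine (Build_Hom A C (fun x => g (f x)) _). intros x y. rewrite !hmul. reflexivity.
Defined.

Definition idhom (A : Group) : Hom A A := Build_Hom A A (fun x => x) (fun _ _ => eq_refl).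

Lemma jZ_comm (G : Group) (j : Hom Zgroup G) (m n : Z) : gmul (j m) (j n) = gmul (j n) (j m).
Proof.
rewrite <- !hmul. simpl. rewrite Z.add_comm. reflexivity.
Qed.

Lemma amal_id (C G1 G2 G : Group) (j1 : Hom C G1) (j2 : Hom C G2) (i1 : Hom G1 G) (i2 : Hom G2 G) :
  IsAmalgam C G1 G2 G j1 j2 i1 i2 ->
  forall f : Hom G G, (forall g, f (i1 g) = i1 g) -> (forall g, f (i2 g) = i2 g) ->
  forall x, f x = x.
Proof.
intros [Hc Hu] f H1 H2 x.
destruct (Hu G i1 i2 Hc) as [F [F1 [F2 FU]]].
rewrite (FU f H1 H2 x). symmetry. apply (FU (idhom G)); reflexivity.
Qed.

Lemma reduce (G1 G2 G : Group) (j1 : Hom Zgroup G1) (j2 : Hom Zgroup G2)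
  (i1 : Hom G1 G) (i2 : Hom G2 G) :
  IsAmalgam Zgroup G1 G2 G j1 j2 i1 i2 ->
  forall (al be : Hom G2 G2),
  (forall c, al (j2 c) = j2 c) -> (forall c, be (j2 c) = j2 c) ->
  (forall g, be (al g) = g) -> (forall g, al (be g) = g) ->
  forall (g0 : G2) (H : Group) (f1 : Hom G1 H) (f2 : Hom G2 H),
  (forall c, f1 (j1 c) = f2 (j2 c)) -> f2 (al g0) <> f2 g0 ->
  exists phi : Hom G G, automorphism G phi /\
    (exists x : G, phi x <> x) /\ (forall g : G1, phi (i1 g) = i1 g).
Proof.
intros HA al be fa fb ba ab g0 H f1 f2 Hf Hsep.
pose proof HA as [Hc Hu].
assert (Ha : forall c, i1 (j1 c) = homcomp _ _ _ i2 al (j2 c)).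
{ intro c. simpl. rewrite fa. apply Hc. }
assert (Hb : forall c, i1 (j1 c) = homcomp _ _ _ i2 be (j2 c)).
{ intro c. simpl. rewrite fb. apply Hc. }
destruct (Hu G i1 _ Ha) as [phi [P1 [P2 _]]].
destruct (Hu G i1 _ Hb) as [psi [Q1 [Q2 _]]].
simpl in P2, Q2.
exists phi. split; [|split].
- exists psi. split.
  + apply (amal_id _ _ _ _ _ _ _ _ HA (homcomp _ _ _ psi phi)); intro g; simpl.
    * rewrite P1, Q1. reflexivity.
    * rewrite P2, Q2, ba. reflexivity.
  + apply (amal_id _ _ _ _ _ _ _ _ HA (homcomp _ _ _ phi psi)); intro g; simpl.
    * rewrite Q1, P1. reflexivity.
    * rewrite Q2, P2, ab. reflexivity.
- exists (i2 g0). rewrite P2. intro E.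
  destruct (Hu H f1 f2 Hf) as [F [F1 [F2 _]]].
  apply Hsep. rewrite <- !F2, E. reflexivity.
- exact P1.
Qed.

Lemma abcase (G1 G2 G : Group) (j1 : Hom Zgroup G1) (j2 : Hom Zgroup G2)
  (i1 : Hom G1 G) (i2 : Hom G2 G) :
  IsAmalgam Zgroup G1 G2 G j1 j2 i1 i2 -> abelian G2 ->
  forall K L : G2 -> Prop, direct_sum G2 K L -> (forall c, K (j2 c)) ->
  forall sg : G2 -> G2, (forall l, L l -> L (sg l)) ->
  (forall l l', L l -> L l' -> sg (gmul l l') = gmul (sg l) (sg l')) ->
  (forall l, L l -> sg (sg l) = l) ->
  forall l0, L l0 -> sg l0 <> l0 ->
  exists phi : Hom G G, automorphism G phi /\
    (exists x : G, phi x <> x) /\ (forall g : G1, phi (i1 g) = i1 g).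
Proof.
intros HA ab K L [[K1 [KM KV]] [[L1 [LM LV]] D]] KC sg sL sM sI l0 Ll0 Hl0.
set (kl := fun g : G2 => epsilon (inhabits (g, g))
   (fun p => K (fst p) /\ L (snd p) /\ g = gmul (fst p) (snd p))).
assert (Hkl : forall g, K (fst (kl g)) /\ L (snd (kl g)) /\ g = gmul (fst (kl g)) (snd (kl g))).
{ intro g. unfold kl. apply epsilon_spec.
  destruct (D g) as [k [l [Hk [Hl [E _]]]]]. exists (k, l). simpl. auto. }
assert (uq : forall k l k' l', K k -> L l -> K k' -> L l' -> gmul k l = gmul k' l' -> k = k' /\ l = l').
{ intros k l k' l' Hk Hl Hk' Hl' E.
  destruct (D (gmul k l)) as [k0 [l0' [_ [_ [_ U]]]]].
  destruct (U k l Hk Hl eq_refl) as [-> ->].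
  destruct (U k' l' Hk' Hl' E) as [-> ->]. auto. }
assert (dec : forall k l, K k -> L l -> fst (kl (gmul k l)) = k /\ snd (kl (gmul k l)) = l).
{ intros k l Hk Hl. destruct (Hkl (gmul k l)) as [A [B E]].
  destruct (uq _ _ _ _ A B Hk Hl (eq_sym E)). auto. }
assert (sg1 : sg gone = gone).
{ apply (gcancel_l G2 (sg gone)). rewrite <- sM by auto. rewrite !gmul1r. reflexivity. }
assert (decM : forall g h, fst (kl (gmul g h)) = gmul (fst (kl g)) (fst (kl h)) /\
                           snd (kl (gmul g h)) = gmul (snd (kl g)) (snd (kl h))).
{ intros g h. destruct (Hkl g) as [A [B E]]. destruct (Hkl h) as [A' [B' E']].
  assert (gmul g h = gmul (gmul (fst (kl g)) (fst (kl h))) (gmul (snd (kl g)) (snd (kl h)))) as E2.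
  { rewrite E at 1. rewrite E' at 1. apply gmul4; auto. }
  rewrite E2. apply dec; auto. }
set (f2 := Build_Hom G2 G2 (fun g => snd (kl g)) (fun g h => proj2 (decM g h))).
assert (alM : forall g h, (fun g => gmul (fst (kl g)) (sg (snd (kl g)))) (gmul g h) =
   gmul ((fun g => gmul (fst (kl g)) (sg (snd (kl g)))) g) ((fun g => gmul (fst (kl g)) (sg (snd (kl g)))) h)).
{ intros g h. simpl. destruct (decM g h) as [-> ->].
  destruct (Hkl g) as [A [B E]]. destruct (Hkl h) as [A' [B' E']].
  rewrite sM by auto. apply gmul4; auto. }
set (al := Build_Hom G2 G2 _ alM).
assert (alI : forall g, al (al g) = g).
{ intro g. simpl. destruct (Hkl g) as [A [B E]].
  destruct (dec (fst (kl g)) (sg (snd (kl g)))) as [-> ->]; auto.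
  rewrite sI by auto. auto. }
assert (alC : forall c, al (j2 c) = j2 c).
{ intro c. simpl. rewrite <- (gmul1r G2 (j2 c)) at 1 2 3.
  destruct (dec (j2 c) gone) as [-> ->]; auto. rewrite sg1. reflexivity. }
apply (reduce G1 G2 G j1 j2 i1 i2 HA al al alC alC alI alI l0 G2 (trivhom G1 G2) f2).
- intro c. simpl. rewrite <- (gmul1r G2 (j2 c)).
  destruct (dec (j2 c) gone) as [_ ->]; auto.
- simpl. rewrite <- (gmul1 G2 l0) at 1 2 3.
  destruct (dec gone l0) as [-> ->]; auto. rewrite gmul1.
  rewrite <- (gmul1 G2 (sg l0)).
  destruct (dec gone (sg l0)) as [_ ->]; auto.
Qed.

Definition nfr (A : Group) (j : Hom Zgroup A) (g : A) : A :=
  epsilon (inhabits gone) (fun x => exists n, x = gmul (j n) g).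
Definition nfc (A : Group) (j : Hom Zgroup A) (g : A) : Z :=
  epsilon (inhabits 0%Z) (fun n => g = gmul (j n) (nfr A j g)).

Lemma jadd (A : Group) (j : Hom Zgroup A) (m n : Z) : j (m + n)%Z = gmul (j m) (j n).
Proof. exact (hmul _ _ j m n). Qed.

Lemma nfr_spec (A : Group) (j : Hom Zgroup A) g : exists n, nfr A j g = gmul (j n) g.
Proof. unfold nfr. apply (epsilon_spec (inhabits gone) (fun x => exists n, x = gmul (j n) g)).
exists g, 0%Z. rewrite (hom1 _ _ j : j 0%Z = gone), gmul1. reflexivity. Qed.

Lemma nf1 (A : Group) (j : Hom Zgroup A) g : g = gmul (j (nfc A j g)) (nfr A j g).
Proof.
unfold nfc. apply (epsilon_spec (inhabits 0%Z) (fun n => g = gmul (j n) (nfr A j g))).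
destruct (nfr_spec A j g) as [m E]. exists (- m)%Z. rewrite E, gmulA, <- jadd.
replace (- m + m)%Z with 0%Z by lia. rewrite (hom1 _ _ j : j 0%Z = gone), gmul1. reflexivity.
Qed.

Lemma nf2 (A : Group) (j : Hom Zgroup A) n g : nfr A j (gmul (j n) g) = nfr A j g.
Proof.
unfold nfr. f_equal. apply functional_extensionality. intro x.
apply propositional_extensionality. split.
- intros [m E]. exists (m + n)%Z. rewrite E, jadd, gmulA. reflexivity.
- intros [m E]. exists (m - n)%Z. rewrite E, gmulA, <- jadd.
  replace (m - n + n)%Z with m by lia. reflexivity.
Qed.

Lemma nf3 (A : Group) (j : Hom Zgroup A) (ji : injective j) n g :
  nfc A j (gmul (j n) g) = (n + nfc A j g)%Z.
Proof.
apply ji. apply (gcancel_r A (nfr A j g)).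
rewrite <- (nf2 A j n g) at 1. rewrite <- nf1, jadd, <- gmulA, <- nf1. reflexivity.
Qed.

Lemma nf4 (A : Group) (j : Hom Zgroup A) g : nfr A j (nfr A j g) = nfr A j g.
Proof. destruct (nfr_spec A j g) as [m E]. rewrite E at 1. apply nf2. Qed.

Lemma nf5 (A : Group) (j : Hom Zgroup A) (ji : injective j) n x :
  nfr A j x = x -> nfc A j (gmul (j n) x) = n /\ nfr A j (gmul (j n) x) = x.
Proof.
intro Hx. split; [|rewrite nf2; exact Hx].
rewrite nf3 by exact ji.
assert (nfc A j x = 0%Z) as ->; [|lia].
apply ji. apply (gcancel_r A x).
transitivity x.
- symmetry. rewrite (nf1 A j x) at 1. rewrite Hx. reflexivity.
- rewrite (hom1 _ _ j : j 0%Z = gone), gmul1. reflexivity.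
Qed.

Record Perm (X : Type) := { pf : X -> X; pg : X -> X;
  pfg : forall x, pf (pg x) = x; pgf : forall x, pg (pf x) = x }.
Arguments pf {X}. Arguments pg {X}.

Lemma perm_eq (X : Type) (p q : Perm X) : (forall x, pf p x = pf q x) -> p = q.
Proof.
intro E. apply functional_extensionality in E.
destruct p as [f1 g1 a1 b1], q as [f2 g2 a2 b2]. simpl in E. subst f2.
assert (g1 = g2).
{ apply functional_extensionality. intro x. rewrite <- (a2 x) at 1. apply b1. }
subst g2. f_equal; apply proof_irrelevance.
Qed.

Definition pcomp (X : Type) (p q : Perm X) : Perm X.
Proof.
refine (Build_Perm X (fun x => pf p (pf q x)) (fun x => pg q (pg p x)) _ _).
- intro x. rewrite pfg, pfg. reflexivity.
- intro x. rewrite pgf, pgf. reflexivity.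
Defined.
Definition pid (X : Type) : Perm X := Build_Perm X (fun x => x) (fun x => x) (fun _ => eq_refl) (fun _ => eq_refl).
Definition pinv (X : Type) (p : Perm X) : Perm X := Build_Perm X (pg p) (pf p) (pgf X p) (pfg X p).

Definition PermG (X : Type) : Group.
Proof.
refine (Build_Group (Perm X) (pcomp X) (pid X) (pinv X) _ _ _).
- intros. apply perm_eq. reflexivity.
- intros. apply perm_eq. reflexivity.
- intros. apply perm_eq. intro w. simpl. apply pgf.
Defined.

Lemma myzorn (T:Type) (P : (T->Prop) -> Prop) :
  (forall F : (T->Prop)->Prop, (forall X, F X -> P X) ->
    (forall X Y, F X -> F Y -> (forall t, X t -> Y t) \/ (forall t, Y t -> X t)) ->
    P (fun t => exists2 X, F X & X t)) ->
  exists A, P A /\ forall B, (forall t, A t -> B t) -> P B -> forall t, B t -> A t.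
Proof.
intros H.
destruct (@classical_sets.Zorn_bigcup T P) as [A [PA HA]].
- intros F HF Ht. apply H; [exact HF| exact Ht].
- exists A. split; [exact PA|]. intros B AB PB t Bt.
  destruct (classic (A t)) as [a|na]; [exact a|].
  exfalso. apply (HA B); [|exact PB]. split; [exact AB|].
  intros BA. exact (na (BA t Bt)).
Qed.

Lemma absigma (G2 : Group) (L : G2 -> Prop) : abelian G2 -> subgroup G2 L -> card_gt2 L ->
  exists sg : G2 -> G2, (forall l, L l -> L (sg l)) /\
  (forall l l', L l -> L l' -> sg (gmul l l') = gmul (sg l) (sg l')) /\
  (forall l, L l -> sg (sg l) = l) /\
  exists l0, L l0 /\ sg l0 <> l0.
Proof.
intros ab [L1 [LM LV]] [a [b [c [La [Lb [Lc [ab' [ac bc]]]]]]]].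
destruct (classic (exists l, L l /\ gmul l l <> gone)) as [[l [Ll Hl]]|Hno].
- exists ginv. split; [|split; [|split]].
  + auto.
  + intros x y _ _. rewrite ginv_mul. apply ab.
  + intros x _. apply (gcancel_r G2 (ginv x)). rewrite gmulV, gmulVr. reflexivity.
  + exists l. split; auto. intro E. apply Hl.
    rewrite <- E at 1. apply gmulV.
- assert (sq : forall l, L l -> gmul l l = gone).
  { intros l Ll. apply NNPP. intro N. apply Hno. eauto. }
  assert (H2 : exists l1 l2, L l1 /\ L l2 /\ l1 <> gone /\ l2 <> gone /\ l1 <> l2).
  { destruct (classic (a = gone)) as [Ea|Ea].
    - subst a. exists b, c. repeat split; auto.
    - destruct (classic (b = gone)) as [Eb|Eb].
      + subst b. exists a, c. repeat split; auto.
      + exists a, b. repeat split; auto. }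
  clear a b c La Lb Lc ab' ac bc Hno.
  destruct H2 as [l1 [l2 [Ll1 [Ll2 [n1 [n2 n12]]]]]].
  set (P := fun S : G2 -> Prop => (forall t, ~ S t) \/
     ((forall t, S t -> L t) /\ S gone /\ (forall x y, S x -> S y -> S (gmul x y)) /\ S l1 /\ ~ S l2)).
  destruct (myzorn G2 P) as [M [PM MM]].
  { intros F FP Ftot.
    destruct (classic (exists X, F X /\ exists t, X t)) as [[X0 [FX0 [t0 Xt0]]]|Nn].
    - right. destruct (FP X0 FX0) as [E|[_ [X01 [_ [X0l1 _]]]]]; [exfalso; exact (E t0 Xt0)|].
      split; [|split; [|split; [|split]]].
      + intros t [X FX Xt]. destruct (FP X FX) as [E|[S _]]; [destruct (E t Xt)|auto].
      + exists X0; auto.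
      + intros x y [X FX Xx] [Y FY Yy].
        destruct (Ftot X Y FX FY) as [XY|YX].
        * exists Y; auto. destruct (FP Y FY) as [E|[_ [_ [S _]]]]; [destruct (E y Yy)|auto].
        * exists X; auto. destruct (FP X FX) as [E|[_ [_ [S _]]]]; [destruct (E x Xx)|auto].
      + exists X0; auto.
      + intros [X FX Xl2]. destruct (FP X FX) as [E|[_ [_ [_ [_ S]]]]]; auto. exact (E _ Xl2).
    - left. intros t [X FX Xt]. apply Nn. eauto. }
  destruct PM as [Me|[ML [M1 [MM' [Ml1 Ml2]]]]].
  { exfalso. set (B := fun t => t = gone \/ t = l1).
    assert (PB : P B).
    { right. unfold B. split; [|split; [|split; [|split]]].
      - intros t [->| ->]; auto.
      - auto.
      - intros x y [->| ->] [->| ->]; rewrite ?gmul1, ?gmul1r; try (rewrite sq by auto); auto.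
      - auto.
      - intros [E|E]; [exact (n2 E)| exact (n12 (eq_sym E))]. }
    apply (Me gone). apply (MM B); [intros t Mt; destruct (Me t Mt)|exact PB|left; reflexivity]. }
  assert (idx : forall l, L l -> M l \/ M (gmul l l2)).
  { intros l Ll. apply NNPP. intro N. apply not_or_and in N. destruct N as [N1 N2].
    set (B := fun t => M t \/ exists m, M m /\ t = gmul l m).
    assert (PB : P B).
    { right. unfold B. split; [|split; [|split; [|split]]].
      - intros t [Mt|[m [Mm ->]]]; auto.
      - auto.
      - intros x y [Mx|[m [Mm ->]]] [My|[m' [Mm' ->]]].
        + auto.
        + right. exists (gmul x m'). split; auto. rewrite !gmulA, (ab x l). reflexivity.
        + right. exists (gmul m y). split; auto. rewrite gmulA. reflexivity.
        + left. rewrite gmul4 by auto. rewrite sq by auto. rewrite gmul1. auto.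
      - auto.
      - intros [E|[m [Mm E]]]; auto. apply N2.
        rewrite E, gmulA, sq, gmul1 by auto. exact Mm. }
    apply N1. apply (MM B); [intros t Mt; left; exact Mt|exact PB|].
    right. exists gone. split; auto. rewrite gmul1r. reflexivity. }
  assert (Minv : forall x y, L x -> L y -> M x -> M (gmul x y) -> M y).
  { intros x y Lx Ly Mx Mxy. replace y with (gmul x (gmul x y)); auto.
    rewrite gmulA, sq, gmul1 by auto. reflexivity. }
  exists (fun l => if excluded_middle_informative (M l) then l else gmul l l1).
  split; [|split; [|split]].
  + intros l Ll. destruct (excluded_middle_informative (M l)); auto.
  + intros x y Lx Ly.
    destruct (excluded_middle_informative (M x)) as [Mx|Mx];
    destruct (excluded_middle_informative (M y)) as [My|My];
    destruct (excluded_middle_informative (M (gmul x y))) as [Mxy|Mxy].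
    * reflexivity.
    * exfalso. auto.
    * exfalso. apply My. eapply Minv; eauto.
    * rewrite gmulA. reflexivity.
    * exfalso. apply Mx. apply (Minv y x); auto. rewrite ab. auto.
    * rewrite <- !gmulA. f_equal. apply ab.
    * rewrite gmul4, sq, gmul1r by auto. reflexivity.
    * exfalso. apply Mxy.
      destruct (idx x Lx) as [|Mx2]; [contradiction|].
      destruct (idx y Ly) as [|My2]; [contradiction|].
      pose proof (MM' _ _ Mx2 My2) as Q. rewrite gmul4, (sq l2), gmul1r in Q by auto. exact Q.
  + intros l Ll. destruct (excluded_middle_informative (M l)) as [Ml|Ml].
    * destruct (excluded_middle_informative (M l)); [reflexivity|contradiction].
    * destruct (excluded_middle_informative (M (gmul l l1))) as [Q|Q].
      -- exfalso. apply Ml. apply (Minv l1 l); auto. rewrite ab. auto.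
      -- rewrite <- gmulA, sq, gmul1r by auto. reflexivity.
  + exists l2. split; auto.
    destruct (excluded_middle_informative (M l2)) as [|_]; [contradiction|].
    intro E. apply n1. apply (gcancel_l G2 l2). rewrite gmul1r. exact E.
Qed.

Arguments nfr : simpl never.
Arguments nfc : simpl never.

Lemma sep_hom (G1 G2 : Group) (j1 : Hom Zgroup G1) (j2 : Hom Zgroup G2) :
  injective j1 -> injective j2 ->
  exists (H : Group) (f1 : Hom G1 H) (f2 : Hom G2 H),
    (forall c, f1 (j1 c) = f2 (j2 c)) /\ (forall x y, f2 x = f2 y -> x = y).
Proof.
intros ji1 ji2.
set (SA := {x : G1 | nfr G1 j1 x = x}).
set (SB := {y : G2 | nfr G2 j2 y = y}).
set (Om := ((Z * SA) * SB)%type).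
set (sA := fun g : G1 => exist (fun x => nfr G1 j1 x = x) (nfr G1 j1 g) (nf4 G1 j1 g) : SA).
set (sB := fun g : G2 => exist (fun x => nfr G2 j2 x = x) (nfr G2 j2 g) (nf4 G2 j2 g) : SB).
set (mkA := fun (g : G1) (y : SB) => ((nfc G1 j1 g, sA g), y) : Om).
set (mkB := fun (x : SA) (g : G2) => ((nfc G2 j2 g, x), sB g) : Om).
set (actA := fun (a : G1) (w : Om) => let '((n, x), y) := w in
   mkA (gmul a (gmul (j1 n) (proj1_sig x))) y).
set (actB := fun (b : G2) (w : Om) => let '((n, x), y) := w in
   mkB x (gmul b (gmul (j2 n) (proj1_sig y)))).
assert (mkA_j : forall m (x : SA) y, mkA (gmul (j1 m) (proj1_sig x)) y = ((m, x), y)).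
{ intros m [x hx] y. unfold mkA, sA. simpl.
  destruct (nf5 G1 j1 ji1 m x hx) as [E1 E2]. rewrite E1. f_equal. f_equal.
  apply subset_eq_compat. exact E2. }
assert (mkB_j : forall m (x : SA) (y : SB), mkB x (gmul (j2 m) (proj1_sig y)) = ((m, x), y)).
{ intros m x [y hy]. unfold mkB, sB. simpl.
  destruct (nf5 G2 j2 ji2 m y hy) as [E1 E2]. rewrite E1. f_equal.
  apply subset_eq_compat. exact E2. }
assert (actA_comp : forall a a' w, actA a (actA a' w) = actA (gmul a a') w).
{ intros a a' [[n x] y]. unfold actA at 2 3. unfold actA, mkA at 1. simpl.
  rewrite <- nf1. rewrite gmulA. reflexivity. }
assert (actB_comp : forall b b' w, actB b (actB b' w) = actB (gmul b b') w).
{ intros b b' [[n x] y]. unfold actB at 2 3. unfold actB, mkB at 1. simpl.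
  rewrite <- nf1. rewrite gmulA. reflexivity. }
assert (actA_1 : forall w, actA gone w = w).
{ intros [[n x] y]. unfold actA. rewrite gmul1. apply mkA_j. }
assert (actB_1 : forall w, actB gone w = w).
{ intros [[n x] y]. unfold actB. rewrite gmul1. apply mkB_j. }
assert (hAp : forall a, (forall w, actA a (actA (ginv a) w) = w) /\ (forall w, actA (ginv a) (actA a w) = w)).
{ intro a. split; intro w; rewrite actA_comp; [rewrite gmulVr|rewrite gmulV]; apply actA_1. }
assert (hBp : forall b, (forall w, actB b (actB (ginv b) w) = w) /\ (forall w, actB (ginv b) (actB b w) = w)).
{ intro b. split; intro w; rewrite actB_comp; [rewrite gmulVr|rewrite gmulV]; apply actB_1. }
set (hA := fun a => Build_Perm Om (actA a) (actA (ginv a)) (proj1 (hAp a)) (proj2 (hAp a))).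
set (hB := fun b => Build_Perm Om (actB b) (actB (ginv b)) (proj1 (hBp b)) (proj2 (hBp b))).
assert (hAM : forall a a', hA (gmul a a') = @gmul (PermG Om) (hA a) (hA a')).
{ intros a a'. apply perm_eq. intro w. simpl. symmetry. apply actA_comp. }
assert (hBM : forall b b', hB (gmul b b') = @gmul (PermG Om) (hB b) (hB b')).
{ intros b b'. apply perm_eq. intro w. simpl. symmetry. apply actB_comp. }
exists (PermG Om), (Build_Hom G1 (PermG Om) hA hAM), (Build_Hom G2 (PermG Om) hB hBM).
split.
- intro c. apply perm_eq. intros [[n x] y]. simpl.
  rewrite !gmulA, <- !jadd. rewrite mkA_j, mkB_j. reflexivity.
- intros b b' E. simpl in E.
  assert (E2 : pf (hB b) (mkB (sA gone) gone) = pf (hB b') (mkB (sA gone) gone)) by (rewrite E; reflexivity).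
  simpl in E2. rewrite <- !nf1, !gmul1r in E2.
  unfold mkB in E2. injection E2 as Ec Er.
  rewrite (nf1 G2 j2 b), (nf1 G2 j2 b'), Ec. f_equal.
  exact Er.
Qed.

Lemma ginvK (G : Group) (a : G) : ginv (ginv a) = a.
Proof. apply (gcancel_r G (ginv a)). rewrite gmulV, gmulVr. reflexivity. Qed.

Definition cj (G : Group) (a : G) : Hom G G.
Proof.
refine (Build_Hom G G (fun g => gmul (gmul a g) (ginv a)) _).
intros x y. rewrite <- !gmulA. f_equal. rewrite (gmulA G (ginv a) a), gmulV, gmul1, !gmulA. reflexivity.
Defined.

Lemma cjK (G : Group) (a g : G) : cj G (ginv a) (cj G a g) = g.
Proof.
simpl. rewrite ginvK. rewrite <- !gmulA, gmulV, gmul1r, !gmulA, gmulV, gmul1. reflexivity.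
Qed.

Lemma cj_comm (G : Group) (a x : G) : gmul a x = gmul x a -> cj G a x = x.
Proof. intro E. simpl. rewrite E, <- gmulA, gmulVr, gmul1r. reflexivity. Qed.

Lemma comm_inv (G : Group) (a x : G) : gmul a x = gmul x a -> gmul (ginv a) x = gmul x (ginv a).
Proof.
intro E. apply (gcancel_l G a). rewrite gmulA, gmulVr, gmul1.
apply (gcancel_r G a). rewrite <- !gmulA, gmulV, gmul1r, E. reflexivity.
Qed.

Theorem lemma4p3 (G1 G2 G : Group) (j1 : Hom Zgroup G1) (j2 : Hom Zgroup G2)
  (i1 : Hom G1 G) (i2 : Hom G2 G) :
  injective j1 -> injective j2 ->
  IsAmalgam Zgroup G1 G2 G j1 j2 i1 i2 ->
  (abelian G2 ->
     exists K L : G2 -> Prop, direct_sum G2 K L /\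
       (forall c : Zgroup, K (j2 c)) /\ card_gt2 L) ->
  exists phi : Hom G G, automorphism G phi /\
    (exists x : G, phi x <> x) /\ (forall g : G1, phi (i1 g) = i1 g).
Proof.
intros ji1 ji2 HA Hab.
destruct (classic (abelian G2)) as [ab|nab].
- destruct (Hab ab) as [K [L [DS [KC C2]]]].
  pose proof DS as [_ [SL _]].
  destruct (absigma G2 L ab SL C2) as [sg [s1 [s2 [s3 [l0 [Ll0 Hl0]]]]]].
  exact (abcase G1 G2 G j1 j2 i1 i2 HA ab K L DS KC sg s1 s2 s3 l0 Ll0 Hl0).
- assert (Hx : exists a b : G2, (forall c, gmul a (j2 c) = gmul (j2 c) a) /\ gmul a b <> gmul b a).
  { destruct (classic (exists g c, gmul g (j2 c) <> gmul (j2 c) g)) as [[g [c N]]|N].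
    - exists (j2 c), g. split.
      + intro c'. apply jZ_comm.
      + intro E. apply N. symmetry. exact E.
    - unfold abelian in nab. apply not_all_ex_not in nab as [x nab].
      apply not_all_ex_not in nab as [y nxy]. exists x, y. split; auto.
      intro c. apply NNPP. intro N'. apply N. exists x, c. exact N'. }
  destruct Hx as [a [b [Ha Hb]]].
  destruct (sep_hom G1 G2 j1 j2 ji1 ji2) as [H [f1 [f2 [Hf Hinj]]]].
  apply (reduce G1 G2 G j1 j2 i1 i2 HA (cj G2 a) (cj G2 (ginv a))) with (g0 := b) (H := H) (f1 := f1) (f2 := f2).
  + intro c. apply cj_comm. apply Ha.
  + intro c. apply cj_comm. apply comm_inv. apply Ha.
  + intro g. apply cjK.
  + intro g. pose proof (cjK G2 (ginv a) g) as E. rewrite ginvK in E. exact E.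
  + exact Hf.
  + intro E. apply Hinj in E. apply Hb. simpl in E. rewrite <- E at 2.
    rewrite <- gmulA, gmulV, gmul1r. reflexivity.
Qed.
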